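(* Let $S$ be a $d$-dimensional space form ($d\ge 2$), i.e. one of: the Euclidean space $\mathbb{R}^d$; the spherical space $\mathbb{S}^d=\{x\in\mathbb{R}^{d+1}:\langle x,x\rangle = C_{\mathbb S}^{-1}\}$ with curvature $C_{\mathbb S}>0$; or the hyperbolic space (Lorentz/'Loid model) $\mathbb{H}^d=\{x\in\mathbb{R}^{d+1}:[x,x]=C_{\mathbb H}^{-1},\ x_1>0\}$ with curvature $C_{\mathbb H}<0$. Then the VC dimension of the class of linear classifiers on $S$ (defined below) equals $\dim(S)+1=d+1$.
   Context: Here $\langle\cdot,\cdot\rangle$ is the standard dot product and $[u,v]=u^{\top}Hv$ with $H=\mathrm{diag}(-1,1,\dots,1)\in\mathbb{R}^{(d+1)\times(d+1)}$ is the Lorentzian inner product. The linear classifiers are: on $\mathbb{R}^d$, $x\mapsto \mathrm{sgn}(w^{\top}x+b)$ with $w\in\mathbb{R}^d$, $\|w\|_2=1$, $b\in\mathbb{R}$; on $\mathbb{S}^d$, $x\mapsto\mathrm{sgn}(\mathrm{asin}(\langle w,x\rangle))$ with $w\in\mathbb{R}^{d+1}$, $\langle w,w\rangle=C_{\mathbb S}$; on $\mathbb{H}^d$, $x\mapsto\mathrm{sgn}(\mathrm{asinh}([w,x]))$ with $w\in\mathbb{R}^{d+1}$, $[w,w]=-C_{\mathbb H}$. The VC dimension of a class of $\{\pm1\}$-valued functions is the largest number of points it shatters. *)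

(* Defs.v *)
From HB Require Import structures.
From mathcomp Require Import all_boot all_order all_algebra.
From mathcomp Require Import all_classical all_reals all_analysis.
Set Implicit Arguments. Unset Strict Implicit. Unset Printing Implicit Defensive.
Import Order.TTheory GRing.Theory Num.Theory.
Local Open Scope ring_scope.
Local Open Scope classical_set_scope.

Section Defs.
Variable R : realType.

(* sign with values in {-1, +1}; convention sgn 0 = +1 *)
Definition sgn (t : R) : R := if 0 <= t then 1 else -1.

Definition asinh (t : R) : R := ln (t + Num.sqrt (t ^+ 2 + 1)).

Definition dotp n (u v : 'rV[R]_n) : R := (u *m v^T) 0 0.

Definition lorentzH n : 'M[R]_n.+1 :=
  diag_mx (\row_(i < n.+1) (if i == ord0 then -1 else 1)).
Definition lorentz n (u v : 'rV[R]_n.+1) : R := (u *m lorentzH n *m v^T) 0 0.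

Definition euclid_space d : set 'rV[R]_d := setT.
Definition sphere_space d (CS : R) : set 'rV[R]_d.+1 :=
  [set x | dotp x x = CS^-1].
Definition hyperbolic_space d (CH : R) : set 'rV[R]_d.+1 :=
  [set x | lorentz x x = CH^-1 /\ 0 < x 0 ord0].

Definition euclid_classifiers d : set ('rV[R]_d -> R) :=
  [set h | exists (w : 'rV[R]_d) (b : R),
     Num.sqrt (dotp w w) = 1 /\ h = (fun x => sgn (dotp w x + b))].
Definition sphere_classifiers d (CS : R) : set ('rV[R]_d.+1 -> R) :=
  [set h | exists w : 'rV[R]_d.+1,
     dotp w w = CS /\ h = (fun x => sgn (asin (dotp w x)))].
Definition hyperbolic_classifiers d (CH : R) : set ('rV[R]_d.+1 -> R) :=
  [set h | exists w : 'rV[R]_d.+1,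
     lorentz w w = - CH /\ h = (fun x => sgn (asinh (lorentz w x)))].

Definition shatters (X : eqType) (D : set X) (Hc : set (X -> R)) (s : seq X) :=
  uniq s /\ (forall x, x \in s -> D x) /\
  forall lab : X -> bool, exists2 h, Hc h &
    forall x, x \in s -> h x = (if lab x then 1 else -1).

Definition VCdim_is (X : eqType) (D : set X) (Hc : set (X -> R)) (n : nat) :=
  (exists s, shatters D Hc s /\ size s = n) /\
  (forall s, shatters D Hc s -> (size s <= n)%N).

End Defs.

(* Main.v *)
Require Import Defs.
From mathcomp Require Import all_boot all_order all_algebra.
From mathcomp Require Import all_classical all_reals all_analysis.
From mathcomp Require Import ring lra.
Import Order.TTheory GRing.Theory Num.Theory.
Local Open Scope ring_scope.

Section Aux.
Variable R : realType.

Lemma dotpE n (u v : 'rV[R]_n) : dotp u v = \sum_i u 0 i * v 0 i.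
Proof. by rewrite /dotp mxE; apply: eq_bigr => i _; rewrite mxE. Qed.

Lemma dotpC n (u v : 'rV[R]_n) : dotp u v = dotp v u.
Proof. by rewrite !dotpE; apply: eq_bigr => i _; rewrite mulrC. Qed.

Lemma dotpZl n c (u v : 'rV[R]_n) : dotp (c *: u) v = c * dotp u v.
Proof. by rewrite !dotpE mulr_sumr; apply: eq_bigr => i _; rewrite mxE mulrA. Qed.

Lemma dotpZr n c (u v : 'rV[R]_n) : dotp u (c *: v) = c * dotp u v.
Proof. by rewrite dotpC dotpZl dotpC. Qed.

Lemma dotp0r n (u : 'rV[R]_n) : dotp u 0 = 0.
Proof. by rewrite dotpE big1 // => i _; rewrite mxE mulr0. Qed.

Lemma lorentzE n (u v : 'rV[R]_n.+1) : lorentz u v =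
  - (u 0 ord0 * v 0 ord0) + \sum_(j < n) u 0 (lift ord0 j) * v 0 (lift ord0 j).
Proof.
rewrite /lorentz /lorentzH mul_mx_diag mxE big_ord_recl !mxE eqxx.
congr (_ + _); first by ring.
by apply: eq_bigr => j _; rewrite !mxE eq_sym (negbTE (neq_lift _ _)) mulr1.
Qed.

Lemma lorentzZl n c (u v : 'rV[R]_n.+1) : lorentz (c *: u) v = c * lorentz u v.
Proof.
rewrite !lorentzE !mxE mulrDr mulr_sumr; congr (_ + _); first by ring.
by apply: eq_bigr => i _; rewrite !mxE mulrA.
Qed.

Lemma lorentzZr n c (u v : 'rV[R]_n.+1) : lorentz u (c *: v) = c * lorentz u v.
Proof.
rewrite !lorentzE !mxE mulrDr mulr_sumr; congr (_ + _); first by ring.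
by apply: eq_bigr => i _; rewrite !mxE; ring.
Qed.

Lemma sgn_m1 {t : R} : sgn t = -1 -> t < 0.
Proof. rewrite /sgn; case: ifPn => [_ E|]; first by exfalso; lra. by rewrite -ltNge. Qed.

Lemma sgn_1 {t : R} : sgn t = 1 -> 0 <= t.
Proof. rewrite /sgn; case: ifPn => // _ E; exfalso; lra. Qed.

Lemma sgn_scale (c : R) (l : bool) : 0 < c ->
  sgn (c * (if l then 1 else -1)) = (if l then 1 else -1).
Proof.
move=> hc; rewrite /sgn; case: l; first by rewrite mulr1 ifT ?ltW.
by rewrite mulrN1 ifF // oppr_ge0 leNgt hc.
Qed.

Lemma sgn_asin (t : R) : -1 <= t <= 1 -> sgn (asin t) = sgn t.
Proof.
move=> ht; have [/andP[a1 a2] st] := asin_def ht.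
have pi0 := @pi_gt0 R.
rewrite /sgn; case: (leP 0 (asin t)) => ha.
  have : 0 <= sin (asin t) by apply: sin_ge0_pi; rewrite ha /=; lra.
  by rewrite st => ->.
have : 0 < sin (- asin t) by apply: sin_gt0_pi; apply/andP; split; lra.
rewrite sinN st => h; rewrite ifF //; apply/negbTE; rewrite -ltNge; lra.
Qed.

Lemma sgn_asinh (t : R) : sgn (asinh t) = sgn t.
Proof.
rewrite /sgn /asinh.
set r := Num.sqrt (t ^+ 2 + 1).
have r0 : 0 <= r by rewrite sqrtr_ge0.
have r2 : r ^+ 2 = t ^+ 2 + 1 by rewrite sqr_sqrtr // addr_ge0 // sqr_ge0.
have pos : 0 < t + r by rewrite !expr2 in r2; nra.
case: (leP 0 t) => ht.
  by rewrite ifT //; apply: ln_ge0; rewrite !expr2 in r2; nra.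
rewrite ifF //; apply/negbTE; rewrite -ltNge; apply: ln_lt0; apply/andP; split => //.
rewrite !expr2 in r2; nra.
Qed.


Lemma ker_nz {m n} (A : 'M[R]_(m, n)) : (n < m)%N ->
  exists i, exists2 v : 'rV[R]_m, v 0 i != 0 & v *m A = 0.
Proof.
move=> lt; have : kermx A != 0.
  rewrite -mxrank_eq0 mxrank_ker subn_eq0 -ltnNge.
  exact: leq_ltn_trans (rank_leq_col A) lt.
case/rowV0Pn => v /sub_kermxP vA nz; move/eqP: vA => vA.
case: (pickP (fun i => v 0 i != 0)) => [i vi|H].
  by exists i; apply: (ex_intro2 _ _ v) => //; apply/eqP.
exfalso; move/negP: nz; apply; apply/eqP/rowP => j; rewrite mxE.
by move: (H j) => /negbFE/eqP.
Qed.

Lemma no_shatter (X : eqType) (D : set X) (Hc : set (X -> R)) (s : seq X)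
  (x0 : X) (lam : 'I_(size s) -> R) (i0 : 'I_(size s)) :
  0 < lam i0 ->
  (forall h, Hc h -> exists f : X -> R, (forall x, x \in s -> h x = sgn (f x)) /\
       \sum_i lam i * f (nth x0 s i) = 0) ->
  ~ shatters D Hc s.
Proof.
move=> lam0 Hf [us [_ sh]].
pose lab x := ~~ (0 < lam (insubd i0 (index x s))).
have [h Hh hl] := sh lab.
have [f [hf fs]] := Hf h Hh.
have key i : lam i * f (nth x0 s i) <= 0 /\ (0 < lam i -> lam i * f (nth x0 s i) < 0).
  have mem : nth x0 s i \in s by rewrite mem_nth.
  have := hl _ mem; rewrite hf // /lab (index_uniq x0 (ltn_ord i) us) valKd.
  case: (ltP 0 (lam i)) => li /= E.
    have fl := sgn_m1 E; split; [nra | move=> _; nra].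
  have fl := sgn_1 E; split => //; nra.
have : \sum_i lam i * f (nth x0 s i) < 0.
  rewrite (bigD1 i0) //=.
  have : \sum_(i | i != i0) lam i * f (nth x0 s i) <= 0.
    by apply: sumr_le0 => i _; case: (key i).
  have := (key i0).2 lam0; lra.
by rewrite fs ltxx.
Qed.

Lemma sum_dotp n m (v : 'rV[R]_m) (A : 'M[R]_(m, n)) (u : 'rV[R]_n) :
  \sum_i v 0 i * dotp u (row i A) = dotp u (v *m A).
Proof.
rewrite dotpE; under eq_bigr do rewrite dotpE mulr_sumr.
rewrite exchange_big /=; apply: eq_bigr => k _; rewrite mxE mulr_sumr.
by apply: eq_bigr => i _; rewrite !mxE; ring.
Qed.

Lemma sign_pick {m} {v : 'rV[R]_m} {i0} : v 0 i0 != 0 ->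
  exists c : R, (c = 1 \/ c = -1) /\ 0 < c * v 0 i0.
Proof.
move=> nz; case: (ltP 0 (v 0 i0)) => h.
  by exists 1; split; [left|rewrite mul1r].
exists (-1); split; first by right.
have : v 0 i0 < 0 by rewrite lt_neqAle nz h.
lra.
Qed.

Lemma ub_lin n (D : set 'rV[R]_n) (Hc : set ('rV[R]_n -> R)) s :
  (forall h, Hc h -> exists u, forall x, x \in s -> h x = sgn (dotp u x)) ->
  shatters D Hc s -> (size s <= n)%N.
Proof.
move=> Hh sh; rewrite leqNgt; apply/negP => lt.
pose A := \matrix_(i < size s) nth 0 s i.
have [i0 [v vnz vA]] := ker_nz A lt.
have [c [c1 cp]] := sign_pick vnz.
apply: (@no_shatter _ D Hc s 0 (fun i => c * v 0 i) i0 cp _ sh).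
move=> h Hch; have [u hu] := Hh h Hch; exists (dotp u); split => //.
under eq_bigr do rewrite -mulrA; rewrite -mulr_sumr.
have -> : \sum_i v 0 i * dotp u (nth 0 s i) = dotp u (v *m A).
  by rewrite -sum_dotp; apply: eq_bigr => i _; rewrite rowK.
by rewrite vA dotp0r mulr0.
Qed.

Lemma ub_aff n (D : set 'rV[R]_n) (Hc : set ('rV[R]_n -> R)) s :
  (forall h, Hc h -> exists u b, forall x, x \in s -> h x = sgn (dotp u x + b)) ->
  shatters D Hc s -> (size s <= n.+1)%N.
Proof.
move=> Hh sh; rewrite leqNgt; apply/negP => lt.
pose X := \matrix_(i < size s) nth 0 s i.
pose A := row_mx X (const_mx 1 : 'M[R]_(size s, 1)).
have lt' : (n + 1 < size s)%N by rewrite addn1.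
have [i0 [v vnz vA]] := ker_nz A lt'.
rewrite mul_mx_row -(row_mx0 _ 1 n 1) in vA.
case/eq_row_mx: vA => vX v1.
have sv : \sum_i v 0 i = 0.
  transitivity ((v *m (const_mx 1 : 'M[R]_(size s, 1))) 0 0); last by rewrite v1 mxE.
  by rewrite mxE; apply: eq_bigr => i _; rewrite mxE mulr1.
have [c [c1 cp]] := sign_pick vnz.
apply: (@no_shatter _ D Hc s 0 (fun i => c * v 0 i) i0 cp _ sh).
move=> h Hch; have [u [b hu]] := Hh h Hch; exists (fun x => dotp u x + b); split => //.
under eq_bigr do rewrite -mulrA; rewrite -mulr_sumr.
under eq_bigr do rewrite mulrDr; rewrite big_split /= -mulr_suml sv mul0r addr0.
have -> : \sum_i v 0 i * dotp u (nth 0 s i) = dotp u (v *m X).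
  by rewrite -sum_dotp; apply: eq_bigr => i _; rewrite rowK.
by rewrite vX dotp0r mulr0.
Qed.


Lemma sphere_bound n (CS : R) (w x : 'rV[R]_n) : 0 < CS ->
  dotp w w = CS -> dotp x x = CS^-1 -> -1 <= dotp w x <= 1.
Proof.
move=> c0 hw hx.
have cc : CS ^+ 2 * CS^-1 = CS by rewrite expr2 -mulrA mulfV ?mulr1 // gt_eqF.
have E (e : R) : \sum_i (w 0 i + e * CS * x 0 i) ^+ 2 =
    dotp w w + 2 * e * CS * dotp w x + e ^+ 2 * (CS ^+ 2 * dotp x x).
  rewrite !dotpE !mulr_sumr -!big_split /=; apply: eq_bigr => i _; ring.
have P (e : R) : 0 <= \sum_i (w 0 i + e * CS * x 0 i) ^+ 2.
  by apply: sumr_ge0 => i _; apply: sqr_ge0.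
have := P 1; have := P (-1); rewrite !E hw hx cc => h1 h2.
apply/andP; split; nra.
Qed.

Lemma sum_if_l n (j : 'I_n) (a : R) (F : 'I_n -> R) :
  \sum_i (if i == j then a else 0) * F i = a * F j.
Proof.
rewrite (bigD1 j) //= eqxx big1 ?addr0 // => i /negbTE ->; by rewrite mul0r.
Qed.

Lemma sum_if_r n (j : 'I_n) (a : R) (F : 'I_n -> R) :
  \sum_i F i * (if i == j then a else 0) = F j * a.
Proof.
rewrite (bigD1 j) //= eqxx big1 ?addr0 // => i /negbTE ->; by rewrite mulr0.
Qed.

Lemma sum_ge_one {n} (j : 'I_n) (F : 'I_n -> R) :
  (forall i, 0 <= F i) -> F j <= \sum_i F i.
Proof.
move=> h; rewrite (bigD1 j) //= lerDl; exact: sumr_ge0.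
Qed.

Definition ev {n} (j : 'I_n) : 'rV[R]_n := \row_i (if i == j then 1 else 0).

Lemma dotp_ev n (u : 'rV[R]_n) j : dotp u (ev j) = u 0 j.
Proof. by rewrite dotpE; under eq_bigr do rewrite mxE; rewrite sum_if_r mulr1. Qed.

Lemma ev_inj n : injective (@ev n).
Proof.
move=> i j /rowP/(_ i); rewrite !mxE eqxx; case: (i =P j) => // _ /eqP.
by rewrite oner_eq0.
Qed.

Definition eps (b : bool) : R := if b then 1 else -1.

Lemma eps2 b : eps b * eps b = 1.
Proof. by case: b; rewrite /eps; ring. Qed.

Lemma eps_diff b1 b2 : 1 <= (2 * eps b1 - eps b2) ^+ 2.
Proof. case: b1; case: b2; rewrite /eps; lra. Qed.


Lemma lb_euclid n : (0 < n)%N ->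
  exists s, shatters (@euclid_space R n) (@euclid_classifiers R n) s /\ size s = n.+1.
Proof.
move=> n0; pose j0 := Ordinal n0.
exists (0 :: map ev (enum 'I_n)); split; last by rewrite /= size_map size_enum_ord.
split; [|split].
- rewrite /= map_inj_uniq ?enum_uniq ?andbT; last exact: ev_inj.
  apply/mapP => -[j _ /rowP/(_ j)]; rewrite !mxE eqxx => /eqP.
  by rewrite eq_sym oner_eq0.
- by [].
move=> lab.
pose a := \row_j (2 * eps (lab (ev j)) - eps (lab 0)) : 'rV[R]_n.
have aa : 0 < dotp a a.
  rewrite dotpE; under eq_bigr do rewrite !mxE -expr2.
  have := sum_ge_one j0 (fun i => (2 * eps (lab (ev i)) - eps (lab 0)) ^+ 2) (fun i => sqr_ge0 _).
  move=> /= H; have := eps_diff (lab (ev j0)) (lab 0); lra.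
set N := Num.sqrt (dotp a a).
have N0 : 0 < N by rewrite sqrtr_gt0.
have NN : N * N = dotp a a by rewrite -expr2 sqr_sqrtr // ltW.
exists (fun x => sgn (dotp (N^-1 *: a) x + N^-1 * eps (lab 0))).
  exists (N^-1 *: a), (N^-1 * eps (lab 0)); split => //.
  rewrite dotpZl dotpZr -NN mulrA -invfM mulVf ?sqrtr1 //.
  by rewrite mulf_neq0 // gt_eqF.
move=> x; rewrite in_cons => /orP[/eqP -> | /mapP[j _ ->]].
  by rewrite dotp0r add0r; apply: sgn_scale; rewrite invr_gt0.
rewrite dotpZl dotp_ev mxE.
have -> : N^-1 * (2 * eps (lab (ev j)) - eps (lab 0)) + N^-1 * eps (lab 0) =
  (2 * N^-1) * eps (lab (ev j)) by ring.
by apply: sgn_scale; rewrite mulr_gt0 // invr_gt0.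
Qed.

Lemma lb_sphere d (CS : R) : 0 < CS ->
  exists s, shatters (@sphere_space R d CS) (@sphere_classifiers R d CS) s /\
    size s = d.+1.
Proof.
move=> c0.
set r := Num.sqrt (CS^-1).
have r0 : 0 < r by rewrite sqrtr_gt0 invr_gt0.
have rr : r * r = CS^-1 by rewrite -expr2 sqr_sqrtr // ltW // invr_gt0.
have px (j : 'I_d.+1) : dotp (r *: ev j) (r *: ev j) = CS^-1.
  by rewrite dotpZl dotpZr dotp_ev !mxE eqxx mulr1 rr.
exists (map (fun j => r *: ev j) (enum 'I_d.+1)).
split; last by rewrite size_map size_enum_ord.
split; [|split].
- rewrite map_inj_uniq ?enum_uniq //.
  move=> i j /rowP/(_ i); rewrite !mxE eqxx mulr1; case: (i =P j) => // _.
  by rewrite mulr0 => /eqP; rewrite gt_eqF.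
- by move=> x /mapP[j _ ->]; rewrite /sphere_space /=.
move=> lab.
set t := Num.sqrt (CS / (d.+1)%:R).
have t0 : 0 < t by rewrite sqrtr_gt0 divr_gt0.
have tt : t * t = CS / (d.+1)%:R by rewrite -expr2 sqr_sqrtr // ltW // divr_gt0.
pose w := t *: \row_j eps (lab (r *: ev j)) : 'rV[R]_d.+1.
have ww : dotp w w = CS.
  rewrite dotpZl dotpZr dotpE; under eq_bigr do rewrite !mxE eps2.
  by rewrite sumr_const card_ord mulrA tt divfK // pnatr_eq0.
exists (fun x => sgn (asin (dotp w x))); first by exists w.
move=> x /mapP[j _ ->].
rewrite sgn_asin; last exact: (sphere_bound _ _ _ _ c0 ww (px j)).
rewrite dotpZl dotpZr dotp_ev mxE mulrA.
by apply: sgn_scale; rewrite mulr_gt0.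
Qed.

Definition mkv {n} (a : R) (F : 'I_n -> R) : 'rV[R]_n.+1 :=
  \row_i (if unlift ord0 i is Some j then F j else a).

Lemma mkv0 n a (F : 'I_n -> R) : mkv a F 0 ord0 = a.
Proof. by rewrite mxE unlift_none. Qed.

Lemma mkvS n a (F : 'I_n -> R) j : mkv a F 0 (lift ord0 j) = F j.
Proof. by rewrite mxE liftK. Qed.

Lemma lorentz_mkv n a (F : 'I_n -> R) b G :
  lorentz (mkv a F) (mkv b G) = - (a * b) + \sum_j F j * G j.
Proof. by rewrite lorentzE !mkv0; under eq_bigr do rewrite !mkvS. Qed.

Lemma lb_hyp d (CH : R) : (0 < d)%N -> CH < 0 ->
  exists s, shatters (@hyperbolic_space R d CH) (@hyperbolic_classifiers R d CH) s /\
    size s = d.+1.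
Proof.
move=> d0 c0; pose j0 := Ordinal d0.
have ci : CH^-1 < 0 by rewrite invr_lt0.
set k := Num.sqrt (- CH^-1 / 16).
have k0 : 0 < k by rewrite sqrtr_gt0 divr_gt0 // oppr_gt0.
have kk : k * k = - CH^-1 / 16.
  by rewrite -expr2 sqr_sqrtr // ltW // divr_gt0 // oppr_gt0.
pose q0 := mkv (4 * k) (fun _ : 'I_d => 0).
pose q j := mkv (5 * k) (fun j' : 'I_d => if j' == j then 3 * k else 0).
exists (q0 :: map q (enum 'I_d)).
split; last by rewrite /= size_map size_enum_ord.
split; [|split].
- rewrite /= map_inj_uniq ?enum_uniq ?andbT.
    apply/mapP => -[j _ E]; move: (congr1 (fun v : 'rV[R]_d.+1 => v 0 ord0) E).
    by rewrite /= !mkv0 => h; exfalso; lra.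
  move=> i j E; move: (congr1 (fun v : 'rV[R]_d.+1 => v 0 (lift ord0 i)) E).
  rewrite /= !mkvS eqxx; case: (i =P j) => // _ h; exfalso; lra.
- move=> x; rewrite in_cons => /orP[/eqP -> | /mapP[j _ ->]].
    rewrite /hyperbolic_space /= lorentz_mkv mkv0 big1 ?addr0; last by move=> i _; rewrite mulr0.
    by split => //; nra.
  rewrite /hyperbolic_space /= lorentz_mkv mkv0 /= sum_if_l eqxx.
  by split => //; nra.
move=> lab.
set e0 := eps (lab q0).
pose c j := 5 * (2 * eps (lab (q j)) - e0).
pose w0 := mkv (-3 * e0) c.
have e00 : e0 * e0 = 1 by apply: eps2.
set L := lorentz w0 w0.
have L0 : 0 < L.
  rewrite /L /w0 lorentz_mkv.
  have : 25 <= \sum_j c j * c j.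
    have := sum_ge_one j0 (fun i => c i * c i) (fun i => (sqr_ge0 (c i) : 0 <= c i * c i)).
    move=> /= H; have := eps_diff (lab (q j0)) (lab q0); rewrite /c -/e0 expr2 => h.
    rewrite /c in H; nra.
  nra.
set m := Num.sqrt (- CH / L).
have m0 : 0 < m by rewrite sqrtr_gt0 divr_gt0 // oppr_gt0.
have mm : m * m = - CH / L by rewrite -expr2 sqr_sqrtr // ltW // divr_gt0 // oppr_gt0.
exists (fun x => sgn (asinh (lorentz (m *: w0) x))).
  exists (m *: w0); split => //.
  by rewrite lorentzZl lorentzZr mulrA mm divfK // gt_eqF.
move=> x; rewrite in_cons => /orP[/eqP -> | /mapP[j _ ->]].
  rewrite sgn_asinh lorentzZl /w0 /q0 lorentz_mkv big1 ?addr0; last by move=> i _; rewrite mulr0.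
  have -> : m * (- (-3 * e0 * (4 * k))) = (m * (12 * k)) * e0 by ring.
  by apply: sgn_scale; rewrite mulr_gt0 // mulr_gt0.
rewrite sgn_asinh lorentzZl /w0 /q lorentz_mkv /= sum_if_r /c.
have -> : m * (- (-3 * e0 * (5 * k)) + 5 * (2 * eps (lab (q j)) - e0) * (3 * k)) =
  (m * (30 * k)) * eps (lab (q j)) by ring.
by apply: sgn_scale; rewrite mulr_gt0 // mulr_gt0.
Qed.

End Aux.

Theorem theorem1 (R : realType) (d : nat) (hd : (2 <= d)%N) :
  VCdim_is (@euclid_space R d) (@euclid_classifiers R d) d.+1 /\
  (forall CS : R, 0 < CS ->
     VCdim_is (@sphere_space R d CS) (@sphere_classifiers R d CS) d.+1) /\
  (forall CH : R, CH < 0 ->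
     VCdim_is (@hyperbolic_space R d CH) (@hyperbolic_classifiers R d CH) d.+1).
Proof.
have d0 : (0 < d)%N by apply: leq_trans hd.
split; [|split].
- split; first exact: lb_euclid.
  move=> s; apply: ub_aff => h [w [b [_ ->]]]; by exists w, b.
- move=> CS c0; split; first exact: lb_sphere.
  move=> s sh; apply: (@ub_lin R _ _ _ s _ sh) => h [w [ww ->]]; exists w => x xs.
  rewrite sgn_asin //; apply: (@sphere_bound R _ _ _ _ c0 ww).
  exact: sh.2.1 x xs.
- move=> CH c0; split; first exact: lb_hyp.
  move=> s sh; apply: (@ub_lin R _ _ _ s _ sh) => h [w [ww ->]]; exists (w *m lorentzH R d) => x xs.
  by rewrite sgn_asinh /lorentz /dotp.
Qed.
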